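(* Let $G$ be a group with a regular gliding system such that there is an upper bound on the cardinality of sets of pairwise independent glides, and suppose $G$ (as a subset of itself) is oriented. Then for every $A\in G$ the typing homomorphism $\mu_A:\pi_1(X_G,A)\to\mathcal{A}(G)$ is injective.
   Context: Gliding system $(\mathcal{G},\mathcal{I})$ in $G$: $\mathcal{G}\subset G\setminus\{1\}$ closed under inversion (glides), $\mathcal{I}\subset\mathcal{G}\times\mathcal{G}$ (independence) with $(s^{-1},t),(t,s)\in\mathcal{I}$ and $st=ts\ne1$ whenever $(s,t)\in\mathcal{I}$; regular if every finite set of pairwise independent glides $S$ is cubic, i.e. $\prod_{t\in T_1}t\ne\prod_{t\in T_2}t$ for distinct $T_1,T_2\subset S$. Glide complex $X_G$: cubed complex with one $k$-cube for each equivalence class of based cubes $(A,S)$ ($A\in G$, $S$ cubic of size $k$) under $(A,S)\sim([T]A,(S\setminus T)\cup\{t^{-1}:t\in T\})$, where $[T]=\prod_{t\in T}t$; vertices $[T]A$, faces cubes of $(A,S')$, $S'\subset S$; 1-cells join $A$ and $sA$. $\mathcal{A}(G)$: right-angled Artin group with generators $g_s$ ($s\in\mathcal{G}$), relations $g_sg_t=g_tg_s$ for $(s,t)\in\mathcal{I}$. An orientation of $G$ directs every 1-cell of $X_G$ so that in every square with vertices $A,sA,tA,stA$ the 1-cells $A$–$sA$ and $tA$–$stA$ are both directed towards $sA,stA$ or both towards $A,tA$ (and likewise with $s,t$ exchanged). For a directed 1-cell $e$ from $A$ to $B$, $|e|=BA^{-1}$. For an edge path through $e_1,\dots,e_n$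 with $\nu_k=\pm1$ according to whether $e_k$ is traversed along or against its orientation, $\mu=g_{|e_1|}^{\nu_1}\cdots g_{|e_n|}^{\nu_n}$; on loops at $A$ this gives the typing homomorphism $\mu_A$. *)

(* Defs.v *)
From Stdlib Require Import List Bool Arith.
Import ListNotations.
Set Implicit Arguments.

Record Group := {
  carrier :> Type;
  gmul : carrier -> carrier -> carrier;
  ginv : carrier -> carrier;
  gone : carrier;
  gmulA : forall a b c, gmul a (gmul b c) = gmul (gmul a b) c;
  gmul1l : forall a, gmul gone a = a;
  gmul1r : forall a, gmul a gone = a;
  gmulVl : forall a, gmul (ginv a) a = gone;
  gmulVr : forall a, gmul a (ginv a) = gone }.

Arguments gmul {g}. Arguments ginv {g}. Arguments gone {g}.

Record GlidingSystem (G : Group) := {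
  glide : G -> Prop;
  indep : G -> G -> Prop;
  glide_neq1 : forall s, glide s -> s <> gone;
  glide_inv : forall s, glide s -> glide (ginv s);
  indep_glide : forall s t, indep s t -> glide s /\ glide t;
  indep_invl : forall s t, indep s t -> indep (ginv s) t;
  indep_sym : forall s t, indep s t -> indep t s;
  indep_comm : forall s t, indep s t -> gmul s t = gmul t s;
  indep_prod_neq1 : forall s t, indep s t -> gmul s t <> gone }.

Arguments glide {G}. Arguments indep {G}.

Section Defs.
Variable G : Group.
Variable GS : GlidingSystem G.

Definition gprod (l : list G) : G := fold_right gmul gone l.

Fixpoint maskl (m : list bool) (l : list G) : list G :=
  match m, l with
  | b :: m', x :: l' => if b then x :: maskl m' l' else maskl m' l'
  | _, _ => []
  end.

Definition pw_indep (S : list G) : Prop :=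
  NoDup S /\ (forall s, In s S -> glide GS s) /\
  (forall s t, In s S -> In t S -> s <> t -> indep GS s t).

(* cubic: distinct subsets (masks) have distinct products *)
Definition cubic (S : list G) : Prop :=
  pw_indep S /\
  forall m1 m2, length m1 = length S -> length m2 = length S -> m1 <> m2 ->
    gprod (maskl m1 S) <> gprod (maskl m2 S).

Definition regular : Prop := forall S, pw_indep S -> cubic S.

Definition bounded_indep : Prop :=
  exists N, forall S, pw_indep S -> length S <= N.

(* 1-cells of X_G: A -- B with B A^{-1} a glide (i.e. B = sA) *)
Definition edge (A B : G) : Prop := glide GS (gmul B (ginv A)).

(* orientation: dir A B = true means the 1-cell A--B is directed from A to B *)
Definition orientation (dir : G -> G -> bool) : Prop :=
  (forall A B, dir A B = true -> edge A B) /\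
  (forall A B, edge A B -> dir A B = negb (dir B A)) /\
  (forall A s t, cubic [s; t] ->
     (dir A (gmul s A) = dir (gmul t A) (gmul s (gmul t A))) /\
     (dir A (gmul t A) = dir (gmul s A) (gmul t (gmul s A)))).

(* edge path from A visiting the vertices of l in order *)
Fixpoint epath (A : G) (l : list G) : Prop :=
  match l with
  | [] => True
  | B :: l' => edge A B /\ epath B l'
  end.

Definition eloop (A : G) (l : list G) : Prop := epath A l /\ last l A = A.

(* words in the generators g_s (s, true) and g_s^{-1} (s, false) *)
Fixpoint mu (dir : G -> G -> bool) (A : G) (l : list G) : list (G * bool) :=
  match l with
  | [] => []
  | B :: l' =>
      (if dir A B then (gmul B (ginv A), true) else (gmul A (ginv B), false))
        :: mu dir B l'
  end.

Inductive raag_eq : list (G * bool) -> list (G * bool) -> Prop :=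
  | raag_refl w : raag_eq w w
  | raag_sym w1 w2 : raag_eq w1 w2 -> raag_eq w2 w1
  | raag_trans w1 w2 w3 : raag_eq w1 w2 -> raag_eq w2 w3 -> raag_eq w1 w3
  | raag_free u v s b : raag_eq (u ++ (s, b) :: (s, negb b) :: v) (u ++ v)
  | raag_comm u v s t b c : indep GS s t ->
      raag_eq (u ++ (s, b) :: (t, c) :: v) (u ++ (t, c) :: (s, b) :: v).

(* homotopy of edge paths (given as full vertex sequences) in X_G:
   generated by backtracking and pushing across 2-cells (squares) *)
Inductive htpy : list G -> list G -> Prop :=
  | htpy_refl p : htpy p p
  | htpy_sym p q : htpy p q -> htpy q p
  | htpy_trans p q r : htpy p q -> htpy q r -> htpy p r
  | htpy_back u x v w : edge v w ->
      htpy (u ++ v :: w :: v :: x) (u ++ v :: x)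
  | htpy_square u x v s t : cubic [s; t] ->
      htpy (u ++ v :: gmul s v :: gmul s (gmul t v) :: x)
           (u ++ v :: gmul t v :: gmul s (gmul t v) :: x).

End Defs.
Arguments mu {G}.
Arguments gprod {G}.
Arguments maskl {G}.

(* Main.v *)
Require Import Defs.
From Stdlib Require Import List Arith Lia Bool Relations Classical.
Import ListNotations.

Ltac noif a := lazymatch a with context [if _ then _ else _] => fail | _ => idtac end.
Ltac ifs := repeat (match goal with
 | |- context [Nat.ltb ?a ?b] => noif a; noif b; destruct (Nat.ltb_spec a b)
 | |- context [Nat.eqb ?a ?b] => noif a; noif b; destruct (Nat.eqb_spec a b)
 end; cbv beta iota).

Definition rl {A} (d:A) (n:nat) (f:nat->nat) (w:list A) : list A :=
  map (fun k => nth (f k) w d) (seq 0 n).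

Lemma rl_length {A} (d:A) n f w : length (rl d n f w) = n.
Proof. unfold rl; rewrite length_map, length_seq; auto. Qed.

Lemma rl_nth {A} (d:A) n f w k : k < n -> nth k (rl d n f w) d = nth (f k) w d.
Proof.
  intros H; unfold rl.
  rewrite (nth_indep _ d (nth (f 0) w d)) by (rewrite length_map, length_seq; auto).
  rewrite (map_nth (fun k => nth (f k) w d) (seq 0 n) 0 k).
  rewrite seq_nth by lia. auto.
Qed.

Lemma rl_ext {A} (d:A) n n' f g w w' : n = n' ->
  (forall k, k < n -> nth (f k) w d = nth (g k) w' d) -> rl d n f w = rl d n' g w'.
Proof.
  intros <- H; unfold rl; apply map_ext_in; intros a Ha; apply in_seq in Ha; apply H; lia.
Qed.

Lemma rl_rl {A} (d:A) n m f g w : (forall k, k < n -> f k < m) ->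
  rl d n f (rl d m g w) = rl d n (fun k => g (f k)) w.
Proof. intros H; apply rl_ext; auto; intros; rewrite rl_nth; auto. Qed.

Lemma rl_id {A} (d:A) w : rl d (length w) (fun k => k) w = w.
Proof.
  apply nth_ext with d d; rewrite ?rl_length; auto; intros; rewrite rl_nth; auto.
Qed.

Definition swp {A} (d:A) k w := rl d (length w) (fun n => if n =? k then k+1 else if n =? k+1 then k else n) w.
Definition rem2 {A} (d:A) i j w := rl d (length w - 2) (fun n => if n <? i then n else if n <? j-1 then n+1 else n+2) w.
Definition rem1 {A} (d:A) p w := rl d (length w - 1) (fun n => if n <? p then n else n+1) w.
Definition mv {A} (d:A) p q w := rl d (length w) (fun n => if n <? p then n else if n <? q then n+1 else if n =? q then p else n) w.

Lemma nth_app3 {A} (d:A) u a b v n : nth n (u ++ a :: b :: v) d =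
  if n <? length u then nth n u d else if n =? length u then a else if n =? length u + 1 then b
  else nth (n - length u - 2) v d.
Proof.
  ifs; try lia.
  - rewrite app_nth1; auto.
  - subst; rewrite app_nth2, Nat.sub_diag by lia; auto.
  - subst; rewrite app_nth2 by lia. replace (length u + 1 - length u) with 1 by lia; auto.
  - rewrite app_nth2 by lia. assert (E: n - length u = S (S (n - length u - 2))) by lia.
    rewrite E at 1. reflexivity.
Qed.

Lemma nth_app2' {A} (d:A) u v n : nth n (u ++ v) d =
  if n <? length u then nth n u d else nth (n - length u) v d.
Proof. ifs; [rewrite app_nth1 | rewrite app_nth2]; auto; lia. Qed.

Lemma swp_app {A} (d:A) u a b v : swp d (length u) (u ++ a :: b :: v) = u ++ b :: a :: v.
Proof.
  apply nth_ext with d d; unfold swp; rewrite ?rl_length, ?length_app; simpl; auto.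
  intros n Hn. rewrite rl_nth by auto. rewrite !nth_app3. ifs; try lia; auto; f_equal; lia.
Qed.

Lemma rem2_app {A} (d:A) u a b v : rem2 d (length u) (length u + 1) (u ++ a :: b :: v) = u ++ v.
Proof.
  apply nth_ext with d d; unfold rem2; rewrite ?rl_length, ?length_app; simpl; try lia.
  intros n Hn. rewrite rl_nth by (simpl in *; lia). rewrite nth_app3, nth_app2'. ifs; try lia; auto; f_equal; lia.
Qed.

Lemma decomp {A} (d:A) k w : k + 1 < length w ->
  w = firstn k w ++ nth k w d :: nth (k+1) w d :: skipn (k+2) w /\ length (firstn k w) = k.
Proof.
  revert w; induction k; intros w H.
  - destruct w as [|a [|b w]]; simpl in *; try lia. auto.
  - destruct w as [|a w]; simpl in *; try lia. destruct (IHk w) as [E1 E2]; [lia|].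
    split; [|lia]. f_equal. exact E1.
Qed.

Ltac rleq := unfold swp, rem2, rem1, mv in *; rewrite ?rl_length;
  repeat (rewrite rl_rl by (let k := fresh in let Hk := fresh in intros k Hk; ifs; lia));
  apply rl_ext; [lia| let k := fresh in let Hk := fresh in intros k Hk; ifs; try lia; f_equal; lia].

Lemma swp_swp {A} (d:A) k w : k + 1 < length w -> swp d k (swp d k w) = w.
Proof. intros. rewrite <- (rl_id d w) at 2. rleq. Qed.

Definition dl {G : Group} : (carrier G * bool)%type := (gone, true).
Definition lc {G : Group} (GS : GlidingSystem G) (x y : (carrier G * bool)%type) : Prop :=
  indep GS (fst x) (fst y).
Definition li {G : Group} (x : (carrier G * bool)%type) : (carrier G * bool)%type :=
  (fst x, negb (snd x)).

Lemma li_li {G : Group} (x : (carrier G * bool)%type) : li (li x) = x.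
Proof. destruct x; unfold li; simpl; rewrite negb_involutive; auto. Qed.

Lemma lc_sym {G} (GS : GlidingSystem G) x y : lc GS x y -> lc GS y x.
Proof. unfold lc; apply indep_sym. Qed.


Definition St {G : Group} (GS : GlidingSystem G) (w w' : list (carrier G * bool)) : Prop :=
  exists k, k + 1 < length w /\ lc GS (nth k w dl) (nth (k+1) w dl) /\ w' = swp dl k w.
Definition Ca {G : Group} (w w' : list (carrier G * bool)) : Prop :=
  exists i, i + 1 < length w /\ nth (i+1) w dl = li (nth i w dl) /\ w' = rem2 dl i (i+1) w.
Definition Rc {G : Group} (GS : GlidingSystem G) (w w' : list (carrier G * bool)) : Prop :=
  exists i j, i < j /\ j < length w /\ nth j w dl = li (nth i w dl) /\
    (forall k, i < k -> k < j -> lc GS (nth i w dl) (nth k w dl)) /\ w' = rem2 dl i j w.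
Definition stp {G : Group} (GS : GlidingSystem G) a b := St GS a b \/ Ca a b.
Definition red {G : Group} (GS : GlidingSystem G) := clos_refl_trans _ (stp GS).
Definition ceq {G : Group} (GS : GlidingSystem G) := clos_refl_trans _ (St GS).

Ltac nths := repeat (rewrite rl_nth by (rewrite ?rl_length; lia)); cbv beta.

Lemma St_sym {G} (GS : GlidingSystem G) a b : St GS a b -> St GS b a.
Proof.
  intros (k & Hk & Hc & ->). exists k. unfold swp at 1 2 3. rewrite rl_length. split; [auto|split].
  - nths. ifs; try lia. replace (k+1+1) with (k+2) by lia. apply lc_sym.
    replace (k+1) with (S k) in * by lia. auto.
  - rewrite swp_swp; auto.
Qed.

Lemma ceq_sym {G} (GS : GlidingSystem G) a b : ceq GS a b -> ceq GS b a.
Proof.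
  induction 1; [apply rt_step, St_sym; auto | apply rt_refl | eapply rt_trans; eauto].
Qed.

Lemma ceq_red {G} (GS : GlidingSystem G) a b : ceq GS a b -> red GS a b.
Proof.
  induction 1; [apply rt_step; left; auto | apply rt_refl | eapply rt_trans; eauto].
Qed.

Lemma St_len {G} (GS : GlidingSystem G) a b : St GS a b -> length b = length a.
Proof. intros (k & _ & _ & ->); unfold swp; rewrite rl_length; auto. Qed.

Lemma ceq_len {G} (GS : GlidingSystem G) a b : ceq GS a b -> length b = length a.
Proof. induction 1; try congruence. eapply St_len; eauto. Qed.

Lemma Ca_len {G : Group} (a b : list (carrier G * bool)) : Ca a b -> length b = length a - 2 /\ 2 <= length a.
Proof. intros (k & Hk & _ & ->); unfold rem2; rewrite rl_length; lia. Qed.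

Lemma Rc_red {G} (GS : GlidingSystem G) : forall n i j w, j - i = n -> i < j -> j < length w ->
  nth j w dl = li (nth i w dl) ->
  (forall k, i < k -> k < j -> lc GS (nth i w dl) (nth k w dl)) -> red GS w (rem2 dl i j w).
Proof.
  induction n; intros i j w En Hij Hj Hx Hc; [lia|].
  destruct (Nat.eq_dec j (i+1)) as [->|Hne].
  - apply rt_step; right. exists i; repeat split; auto; lia.
  - assert (Hs : St GS w (swp dl (j-1) w)).
    { exists (j-1); repeat split; try lia. replace (j-1+1) with j by lia. rewrite Hx.
      unfold lc, li; simpl. apply indep_sym. apply Hc; lia. }
    eapply rt_trans; [apply rt_step; left; exact Hs|].
    replace (rem2 dl i j w) with (rem2 dl i (j-1) (swp dl (j-1) w)) by rleq.
    apply (IHn i (j-1)); unfold swp; rewrite ?rl_length; try lia.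
    + nths. ifs; try lia. replace (j-1+1) with j by lia. auto.
    + intros k Hk1 Hk2. nths. ifs; try lia. apply Hc; lia.
Qed.

Lemma coherence {G} (GS : GlidingSystem G) y y'' z :
  Rc GS y y'' -> St GS y z -> exists z'', Rc GS z z'' /\ ceq GS y'' z''.
Proof.
  intros (i & j & Hij & Hj & Hx & Hb & ->) (k & Hk & Hc & ->).
  assert (Hlz : length (swp dl k y) = length y) by (unfold swp; apply rl_length).
  destruct (lt_eq_lt_dec (k+1) i) as [[Hlt|Heq]|Hgt].
  -
    exists (rem2 dl i j (swp dl k y)). split.
    + exists i, j. rewrite Hlz. repeat split; auto.
      * unfold swp; nths. ifs; try lia. auto.
      * intros m H1 H2. unfold swp; nths. ifs; try lia. auto.
    + apply rt_step. exists k. unfold rem2 at 1; rewrite rl_length. repeat split; try lia.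
      * unfold rem2; nths. ifs; try lia. replace (k+1+1) with (k+2) by lia. auto.
      * rleq.
  -
    subst i. exists (rem2 dl k j (swp dl k y)). split.
    + exists k, j. rewrite Hlz. repeat split; auto; try lia.
      * unfold swp; nths. ifs; try lia. auto.
      * intros m H1 H2. unfold swp; nths. ifs; try lia.
        -- subst; apply lc_sym; auto.
        -- apply Hb; lia.
    + replace (rem2 dl k j (swp dl k y)) with (rem2 dl (k+1) j y) by rleq. apply rt_refl.
  - destruct (Nat.eq_dec k i) as [->|Hki].
    + destruct (Nat.eq_dec j (i+1)) as [->|Hji].
      *
        exists (rem2 dl i (i+1) (swp dl i y)). split.
        -- exists i, (i+1). rewrite Hlz. repeat split; auto; try lia.
           ++ unfold swp; nths. ifs; try lia. rewrite Hx, li_li. auto.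
        -- replace (rem2 dl i (i+1) (swp dl i y)) with (rem2 dl i (i+1) y) by rleq. apply rt_refl.
      *
        exists (rem2 dl (i+1) j (swp dl i y)). split.
        -- exists (i+1), j. rewrite Hlz. repeat split; auto; try lia.
           ++ unfold swp; nths. ifs; try lia. auto.
           ++ intros m H1 H2. unfold swp; nths. ifs; try lia. apply Hb; lia.
        -- replace (rem2 dl (i+1) j (swp dl i y)) with (rem2 dl i j y) by rleq. apply rt_refl.
    + destruct (lt_eq_lt_dec (k+1) j) as [[Hlt2|Heq2]|Hgt2].
      *
        exists (rem2 dl i j (swp dl k y)). split.
        -- exists i, j. rewrite Hlz. repeat split; auto.
           ++ unfold swp; nths. ifs; try lia. auto.
           ++ intros m H1 H2. unfold swp; nths. ifs; try lia; apply Hb; lia.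
        -- apply rt_step. exists (k-1). unfold rem2 at 1; rewrite rl_length. repeat split; try lia.
           ++ unfold rem2; nths. ifs; try lia. replace (k-1+1+1) with (k+1) by lia.
              replace (k-1+1) with k by lia. auto.
           ++ rleq.
      *
        subst j. exists (rem2 dl i k (swp dl k y)). split.
        -- exists i, k. rewrite Hlz. repeat split; auto; try lia.
           ++ unfold swp; nths. ifs; try lia. auto.
           ++ intros m H1 H2. unfold swp; nths. ifs; try lia. apply Hb; lia.
        -- replace (rem2 dl i k (swp dl k y)) with (rem2 dl i (k+1) y) by rleq. apply rt_refl.
      * destruct (Nat.eq_dec k j) as [->|Hkj].
        --
           exists (rem2 dl i (j+1) (swp dl j y)). split.
           ++ exists i, (j+1). rewrite Hlz. repeat split; auto; try lia.
              ** unfold swp; nths. ifs; try lia. auto.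
              ** intros m H1 H2. unfold swp; nths. ifs; try lia.
                 --- rewrite Hx in Hc. unfold lc, li in *; simpl in *. subst. exact Hc.
                 --- apply Hb; lia.
           ++ replace (rem2 dl i (j+1) (swp dl j y)) with (rem2 dl i j y) by rleq. apply rt_refl.
        --
           exists (rem2 dl i j (swp dl k y)). split.
           ++ exists i, j. rewrite Hlz. repeat split; auto; try lia.
              ** unfold swp; nths. ifs; try lia. auto.
              ** intros m H1 H2. unfold swp; nths. ifs; try lia. apply Hb; lia.
           ++ apply rt_step. exists (k-2). unfold rem2 at 1; rewrite rl_length. repeat split; try lia.
              ** unfold rem2; nths. ifs; try lia. replace (k-2+1+2) with (k+1) by lia.
                 replace (k-2+2) with k by lia. auto.
              ** rleq.
Qed.

Ltac rlgen := unfold swp, rem2, rem1, mv in *; rewrite ?rl_length;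
  repeat (rewrite rl_rl by (let k := fresh in let Hk := fresh in intros k Hk; ifs; lia));
  apply rl_ext; [lia| let k := fresh in let Hk := fresh in intros k Hk; ifs; try lia; try (f_equal; lia)].

Lemma key {G} (GS : GlidingSystem G) y x : ceq GS y x -> forall y'', Rc GS y y'' ->
  exists z'', Rc GS x z'' /\ ceq GS y'' z''.
Proof.
  intros H; apply clos_rt_rt1n in H; induction H; intros y'' Hr.
  - exists y''; split; auto; apply rt_refl.
  - destruct (coherence GS _ _ _ Hr H) as (z1 & Hz1 & Hc1).
    destruct (IHclos_refl_trans_1n _ Hz1) as (z2 & Hz2 & Hc2).
    exists z2; split; auto; eapply rt_trans; eauto.
Qed.

Lemma mv_ceq {G} (GS : GlidingSystem G) : forall n p q s, q - p = n -> p <= q -> q < length s ->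
  (forall m, p < m -> m <= q -> lc GS (nth p s dl) (nth m s dl)) -> ceq GS s (mv dl p q s).
Proof.
  induction n; intros p q s En Hpq Hq Hc.
  - replace (mv dl p q s) with s; [apply rt_refl|].
    rewrite <- (rl_id dl s) at 1. rlgen.
  - assert (Hs : St GS s (swp dl p s)) by (exists p; repeat split; try lia; apply Hc; lia).
    eapply rt_trans; [apply rt_step; exact Hs|].
    replace (mv dl p q s) with (mv dl (p+1) q (swp dl p s)) by rlgen.
    apply IHn; unfold swp; rewrite ?rl_length; try lia.
    intros m H1 H2. nths. ifs; try lia. apply lc_sym. replace (p+1) with (S p) in * by lia.
    apply lc_sym; apply Hc; lia.
Qed.

Lemma rem1_move {G} (GS : GlidingSystem G) t p q : p < q -> q < length t ->
  nth p t dl = nth q t dl -> (forall n, p < n -> n < q -> lc GS (nth p t dl) (nth n t dl)) ->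
  ceq GS (rem1 dl q t) (rem1 dl p t).
Proof.
  intros Hpq Hq He Hc.
  replace (rem1 dl p t) with (mv dl p (q-1) (rem1 dl q t)).
  - apply (mv_ceq GS (q-1-p)); unfold rem1; rewrite ?rl_length; try lia.
    intros m H1 H2. nths. ifs; try lia. apply Hc; lia.
  - rlgen. subst. replace (q-1+1) with q by lia. auto.
Qed.

Lemma li_inj {G : Group} (a b : (carrier G * bool)%type) : li a = li b -> a = b.
Proof. intros H; rewrite <- (li_li a), <- (li_li b), H; auto. Qed.

Lemma lc_li {G} (GS : GlidingSystem G) a b : lc GS a b -> lc GS (li a) b.
Proof. unfold lc, li; simpl; auto. Qed.

Lemma Ca_red {G} (GS : GlidingSystem G) x k : k + 1 < length x -> nth (k+1) x dl = li (nth k x dl) ->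
  red GS x (rem2 dl k (k+1) x).
Proof. intros; apply rt_step; right; exists k; auto. Qed.

Lemma local_conf {G} (GS : GlidingSystem G) x z x'' : Rc GS x z -> Ca x x'' ->
  exists v, red GS z v /\ red GS x'' v.
Proof.
  intros (i & j & Hij & Hj & Hx & Hb & ->) (k & Hk & Hy & ->).
  destruct (lt_eq_lt_dec (k+1) i) as [[H1|H1]|H1].
  - exists (rem2 dl (i-2) (j-2) (rem2 dl k (k+1) x)). split.
    + replace (rem2 dl (i-2) (j-2) (rem2 dl k (k+1) x)) with (rem2 dl k (k+1) (rem2 dl i j x)) by rleq.
      apply Ca_red; unfold rem2; rewrite ?rl_length; try lia. nths. ifs; try lia. auto.
    + apply (Rc_red GS (j-2-(i-2))); unfold rem2; rewrite ?rl_length; try lia.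
      * nths. ifs; try lia. replace (j-2+2) with j by lia. replace (i-2+2) with i by lia. auto.
      * intros m Hm1 Hm2. nths. ifs; try lia. replace (i-2+2) with i by lia. apply Hb; lia.
  -
    subst i. assert (Hk' : nth k x dl = li (nth (k+1) x dl)) by (rewrite Hy, li_li; auto).
    exists (rem2 dl k (k+1) x). split; [|apply rt_refl].
    apply ceq_red.
    replace (rem2 dl (k+1) j x) with (rem1 dl (j-1) (rem1 dl (k+1) x)) by rleq.
    replace (rem2 dl k (k+1) x) with (rem1 dl k (rem1 dl (k+1) x)) by rleq.
    apply rem1_move; unfold rem1; rewrite ?rl_length; try lia.
    + nths. ifs; try lia. replace (j-1+1) with j by lia. rewrite Hx; auto.
    + intros n Hn1 Hn2. nths. ifs; try lia. rewrite Hk'. apply lc_li. apply Hb; lia.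
  - destruct (Nat.eq_dec k i) as [->|Hki].
    + destruct (Nat.eq_dec j (i+1)) as [->|Hji].
      * exists (rem2 dl i (i+1) x); split; apply rt_refl.
      * exists (rem2 dl i (i+1) x). split; [|apply rt_refl].
        apply ceq_red.
        replace (rem2 dl i j x) with (rem1 dl (j-1) (rem1 dl i x)) by rleq.
        replace (rem2 dl i (i+1) x) with (rem1 dl i (rem1 dl i x)) by rleq.
        apply rem1_move; unfold rem1; rewrite ?rl_length; try lia.
        -- nths. ifs; try lia. replace (j-1+1) with j by lia. rewrite Hx, Hy; auto.
        -- intros n Hn1 Hn2. nths. ifs; try lia. rewrite Hy. apply lc_li. apply Hb; lia.
    + destruct (lt_eq_lt_dec (k+1) j) as [[H2|H2]|H2].
      * exists (rem2 dl i (j-2) (rem2 dl k (k+1) x)). split.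
        -- replace (rem2 dl i (j-2) (rem2 dl k (k+1) x)) with (rem2 dl (k-1) k (rem2 dl i j x)) by rleq.
           replace k with (k-1+1) at 2 by lia.
           apply Ca_red; unfold rem2; rewrite ?rl_length; try lia. nths. ifs; try lia.
           replace (k-1+1+1) with (k+1) by lia. replace (k-1+1) with k by lia. auto.
        -- apply (Rc_red GS (j-2-i)); unfold rem2; rewrite ?rl_length; try lia.
           ++ nths. ifs; try lia. replace (j-2+2) with j by lia. auto.
           ++ intros m Hm1 Hm2. nths. ifs; try lia; apply Hb; lia.
      *
        subst j. assert (Hki' : nth k x dl = nth i x dl) by (apply li_inj; rewrite <- Hx, Hy; auto).
        exists (rem2 dl i (k+1) x). split; [apply rt_refl|].
        apply ceq_red.
        replace (rem2 dl i (k+1) x) with (rem1 dl i (rem1 dl (k+1) x)) by rleq.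
        replace (rem2 dl k (k+1) x) with (rem1 dl k (rem1 dl (k+1) x)) by rleq.
        apply rem1_move; unfold rem1; rewrite ?rl_length; try lia.
        -- nths. ifs; try lia. auto.
        -- intros n Hn1 Hn2. nths. ifs; try lia. apply Hb; lia.
      * destruct (Nat.eq_dec k j) as [->|Hkj].
        -- assert (Hj1 : nth (j+1) x dl = nth i x dl) by (rewrite Hy, Hx, li_li; auto).
           exists (rem2 dl i j x). split; [apply rt_refl|].
           apply ceq_red.
           replace (rem2 dl i j x) with (rem1 dl i (rem1 dl j x)) by rleq.
           replace (rem2 dl j (j+1) x) with (rem1 dl j (rem1 dl j x)) by rleq.
           apply rem1_move; unfold rem1; rewrite ?rl_length; try lia.
           ++ nths. ifs; try lia. auto.
           ++ intros n Hn1 Hn2. nths. ifs; try lia. apply Hb; lia.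
        -- exists (rem2 dl i j (rem2 dl k (k+1) x)). split.
           ++ replace (rem2 dl i j (rem2 dl k (k+1) x)) with (rem2 dl (k-2) (k-1) (rem2 dl i j x)) by rleq.
              replace (k-1) with (k-2+1) by lia.
              apply Ca_red; unfold rem2; rewrite ?rl_length; try lia. nths. ifs; try lia.
              replace (k-2+1+2) with (k+1) by lia. replace (k-2+2) with k by lia. auto.
           ++ apply (Rc_red GS (j-i)); unfold rem2; rewrite ?rl_length; try lia.
              ** nths. ifs; try lia. auto.
              ** intros m Hm1 Hm2. nths. ifs; try lia; apply Hb; lia.
Qed.

Lemma red_first {G} (GS : GlidingSystem G) w a : red GS w a ->
  ceq GS w a \/ exists w' w'', ceq GS w w' /\ Ca w' w'' /\ red GS w'' a.
Proof.
  intros H; apply clos_rt_rt1n in H; induction H.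
  - left; apply rt_refl.
  - destruct H as [H|H].
    + destruct IHclos_refl_trans_1n as [Hc|(w' & w'' & H1 & H2 & H3)].
      * left; eapply rt_trans; [apply rt_step|]; eauto.
      * right; exists w', w''; repeat split; auto. eapply rt_trans; [apply rt_step|]; eauto.
    + right; exists x, y; repeat split; auto. apply rt_refl. apply clos_rt1n_rt; auto.
Qed.

Definition J {G} (GS : GlidingSystem G) a b := exists v, red GS a v /\ red GS b v.

Lemma Ca_Rc {G} (GS : GlidingSystem G) a b : Ca a b -> Rc GS a b.
Proof. intros (i & H1 & H2 & ->); exists i, (i+1); repeat split; auto; lia. Qed.

Lemma CR {G} (GS : GlidingSystem G) : forall n w, length w < n -> forall a b,
  red GS w a -> red GS w b -> J GS a b.
Proof.
  induction n; intros w Hw a b Ha Hb; [lia|].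
  destruct (red_first GS _ _ Ha) as [Ha'|(w1 & w1'' & Hw1 & Hc1 & Hr1)].
  - exists b; split; [|apply rt_refl]. eapply rt_trans; [apply ceq_red, ceq_sym; eauto|auto].
  - destruct (red_first GS _ _ Hb) as [Hb'|(x & x'' & Hx & Hc2 & Hr2)].
    + exists a; split; [apply rt_refl|]. eapply rt_trans; [apply ceq_red, ceq_sym; eauto|auto].
    + assert (Hwx : ceq GS w1 x) by (eapply rt_trans; [apply ceq_sym; eauto|auto]).
      destruct (key GS _ _ Hwx _ (Ca_Rc GS _ _ Hc1)) as (z & Hz & Hcz).
      destruct (local_conf GS _ _ _ Hz Hc2) as (v & Hv1 & Hv2).
      assert (L1 := Ca_len _ _ Hc1). assert (L2 := Ca_len _ _ Hc2).
      assert (E1 := ceq_len GS _ _ Hw1). assert (E2 := ceq_len GS _ _ Hx).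
      destruct (IHn w1'' ltac:(lia) a v Hr1 (rt_trans _ _ _ _ _ (ceq_red GS _ _ Hcz) Hv1)) as (p & Hp1 & Hp2).
      destruct (IHn x'' ltac:(lia) b p Hr2 (rt_trans _ _ _ _ _ Hv2 Hp2)) as (q & Hq1 & Hq2).
      exists q; split; auto. eapply rt_trans; eauto.
Qed.

Lemma raag_J {G} (GS : GlidingSystem G) w1 w2 : raag_eq GS w1 w2 -> J GS w1 w2.
Proof.
  induction 1.
  - exists w; split; apply rt_refl.
  - destruct IHraag_eq as (v & H1 & H2); exists v; auto.
  - destruct IHraag_eq1 as (v1 & H1 & H2). destruct IHraag_eq2 as (v2 & H3 & H4).
    destruct (CR GS (S (length w2)) w2 ltac:(lia) v1 v2 H2 H3) as (p & Hp1 & Hp2).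
    exists p; split; eapply rt_trans; eauto.
  - exists (u ++ v); split; [|apply rt_refl].
    rewrite <- (rem2_app dl u (s,b) (s, negb b) v).
    apply Ca_red; rewrite ?length_app; simpl; try lia.
    rewrite !nth_app3. ifs; try lia. auto.
  - exists (u ++ (t,c) :: (s,b) :: v); split; [|apply rt_refl].
    apply rt_step; left. exists (length u). rewrite length_app; simpl. repeat split; try lia.
    + rewrite !nth_app3. ifs; try lia. exact H.
    + rewrite swp_app; auto.
Qed.


Lemma gK {G : Group} (x y : G) : gmul (gmul x y) (ginv y) = x.
Proof. rewrite <- gmulA, gmulVr, gmul1r; auto. Qed.
Lemma gVK {G : Group} (x y : G) : gmul (gmul x (ginv y)) y = x.
Proof. rewrite <- gmulA, gmulVl, gmul1r; auto. Qed.
Lemma gKl {G : Group} (a x : G) : gmul (ginv a) (gmul a x) = x.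
Proof. rewrite gmulA, gmulVl, gmul1l; auto. Qed.
Lemma gKl' {G : Group} (a x : G) : gmul a (gmul (ginv a) x) = x.
Proof. rewrite gmulA, gmulVr, gmul1l; auto. Qed.
Lemma inv_uniq {G : Group} (a b : G) : gmul a b = gone -> b = ginv a.
Proof. intros H. rewrite <- (gKl a b), H, gmul1r; auto. Qed.
Lemma ginv_ginv {G : Group} (a : G) : ginv (ginv a) = a.
Proof. symmetry; apply inv_uniq, gmulVl. Qed.
Lemma ginv_mul {G : Group} (a b : G) : ginv (gmul a b) = gmul (ginv b) (ginv a).
Proof.
  symmetry; apply inv_uniq. rewrite <- gmulA, (gmulA _ b), gmulVr, gmul1l, gmulVr; auto.
Qed.

Definition sg {G : Group} (s : G) (b : bool) : G := if b then s else ginv s.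

Lemma lab_char {G : Group} (dir : G -> G -> bool) (V B s : G) (b : bool) :
  (if dir V B then (gmul B (ginv V), true) else (gmul V (ginv B), false)) = (s, b) <->
  dir V B = b /\ B = gmul (sg s b) V.
Proof.
  destruct (dir V B); split.
  - intros H; inversion H; subst; simpl; rewrite gVK; auto.
  - intros [<- ->]; simpl; rewrite gK; auto.
  - intros H; inversion H; subst; simpl. rewrite ginv_mul, ginv_ginv, gVK; auto.
  - intros [<- ->]; simpl. rewrite ginv_mul, ginv_ginv, gKl'; auto.
Qed.

Lemma last_cons {A} (l : list A) (B a : A) : last (B :: l) a = last l B.
Proof.
  revert B a; induction l as [|c l IH]; intros B a; auto.
  change (last (B :: c :: l) a) with (last (c :: l) a). rewrite !IH; auto.
Qed.

Lemma mu_app {G : Group} dir (A : G) l1 l2 :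
  mu dir A (l1 ++ l2) = mu dir A l1 ++ mu dir (last l1 A) l2.
Proof.
  revert A; induction l1 as [|B l1 IH]; intros A; [reflexivity|].
  change ((B::l1)++l2) with (B::(l1++l2)). cbn [mu]. rewrite IH, last_cons. reflexivity.
Qed.

Lemma mu_length {G : Group} dir (A : G) l : length (mu dir A l) = length l.
Proof. revert A; induction l; intros; simpl; auto. Qed.

Lemma epath_app {G} (GS : GlidingSystem G) (A : G) l1 l2 :
  epath GS A (l1 ++ l2) <-> epath GS A l1 /\ epath GS (last l1 A) l2.
Proof.
  revert A; induction l1 as [|B l1 IH]; intros A. { simpl; tauto. }
  change ((B::l1)++l2) with (B::(l1++l2)). cbn [epath]. rewrite IH, last_cons. tauto.
Qed.

Lemma app_inj {X} (a b c e : list X) : length a = length c -> a ++ b = c ++ e -> a = c /\ b = e.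
Proof.
  revert c; induction a; intros c Hl H; destruct c; simpl in *; try lia; auto.
  inversion H; subst. destruct (IHa c) as [-> ->]; auto.
Qed.

Lemma mu_inj {G : Group} dir (A : G) l1 l2 : mu dir A l1 = mu dir A l2 -> l1 = l2.
Proof.
  revert A l2; induction l1 as [|B l1 IH]; intros A [|C l2] H; simpl in H; try discriminate; auto.
  inversion H as [[H1 H2]].
  destruct (if dir A C then (gmul C (ginv A), true) else (gmul A (ginv C), false)) as [s b] eqn:E.
  apply lab_char in E. apply lab_char in H1. destruct E as [_ E]; destruct H1 as [_ H1].
  subst. f_equal. eapply IH; eauto.
Qed.

Lemma sg_eq {G} (GS : GlidingSystem G) s t b c : indep GS s t -> sg s b = sg t c -> s = t /\ b = c.
Proof.
  intros Hi H. pose proof (indep_prod_neq1 _ _ _ Hi) as Hn.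
  destruct b, c; simpl in H; auto.
  - subst. exfalso; apply Hn; apply gmulVl.
  - subst. exfalso; apply Hn; apply gmulVr.
  - split; auto. rewrite <- (ginv_ginv s), H, ginv_ginv; auto.
Qed.

Lemma indep_sg {G} (GS : GlidingSystem G) s t b c : indep GS s t -> indep GS (sg s b) (sg t c).
Proof.
  intros H; destruct b, c; simpl; auto.
  - apply indep_sym, indep_invl, indep_sym; auto.
  - apply indep_invl; auto.
  - apply indep_invl, indep_sym, indep_invl, indep_sym; auto.
Qed.

Lemma glide_sg {G} (GS : GlidingSystem G) s b : glide GS s -> glide GS (sg s b).
Proof. destruct b; simpl; auto using glide_inv. Qed.

Lemma sg_cancel {G : Group} (s V : G) b : gmul (sg s (negb b)) (gmul (sg s b) V) = V.
Proof. destruct b; simpl; [apply gKl | apply gKl']. Qed.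

Lemma split_last {G : Group} (A : G) l1 X :
  A :: l1 ++ X = removelast (A :: l1) ++ last l1 A :: X.
Proof.
  rewrite app_comm_cons. rewrite (app_removelast_last A (l:=A::l1)) at 1 by discriminate.
  rewrite last_cons, <- app_assoc; auto.
Qed.

Lemma split4 {X} (d : X) k (w : list X) : k + 1 < length w ->
  exists u x y v, w = u ++ x :: y :: v /\ length u = k.
Proof. intros H; destruct (decomp d k w H) as [E L]; do 4 eexists; eauto. Qed.

Lemma rem2_decomp {X} (d:X) k w : k+1 < length w -> rem2 d k (k+1) w = firstn k w ++ skipn (k+2) w.
Proof.
  intros H. destruct (split4 d k w H) as (u&x&y&v&->&<-). rewrite rem2_app.
  rewrite firstn_app, Nat.sub_diag, firstn_O, app_nil_r, firstn_all.
  rewrite skipn_app, skipn_all2 by lia. replace (length u + 2 - length u) with 2 by lia. simpl. auto.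
Qed.

Lemma lift_step {G} (GS : GlidingSystem G) (Hreg : regular GS) dir (Hor : orientation GS dir)
  w w' : stp GS w w' -> forall A l, epath GS A l -> mu dir A l = w ->
  exists l', epath GS A l' /\ mu dir A l' = w' /\ htpy GS (A :: l) (A :: l').
Proof.
  intros Hs A l Hp Hm.
  assert (Hk : forall k, k + 1 < length w -> exists l1 B C l2, l = l1 ++ B :: C :: l2 /\
     mu dir A l1 = firstn k w /\
     nth k w dl = (if dir (last l1 A) B then (gmul B (ginv (last l1 A)), true)
                   else (gmul (last l1 A) (ginv B), false)) /\
     nth (k+1) w dl = (if dir B C then (gmul C (ginv B), true) else (gmul B (ginv C), false)) /\
     mu dir C l2 = skipn (k+2) w /\ length (firstn k w) = k).
  { intros k Hk. rewrite <- Hm, mu_length in Hk.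
    destruct (split4 A k l Hk) as (l1 & B & C & l2 & -> & Hl1).
    exists l1, B, C, l2. rewrite <- Hm, mu_app. cbn [mu].
    rewrite <- (mu_length dir A l1) in Hl1.
    rewrite firstn_app, Hl1, Nat.sub_diag, firstn_O, app_nil_r, firstn_all2 by lia.
    rewrite !nth_app3, Hl1, skipn_app, Hl1. ifs; try lia.
    replace (k+2-k) with 2 by lia. rewrite skipn_all2 by lia. simpl. repeat split; auto. }
  destruct Hs as [(k & Hk1 & Hc & ->) | (k & Hk1 & Hy & ->)].
  - destruct (Hk k Hk1) as (l1 & B & C & l2 & -> & Hu & Hx & Hy & Hv & Hlu).
    set (V := last l1 A) in *.
    destruct (nth k w dl) as [s b] eqn:Ex. destruct (nth (k+1) w dl) as [t c] eqn:Ey.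
    symmetry in Hx, Hy. apply lab_char in Hx, Hy.
    destruct Hx as [Hd1 HB]; destruct Hy as [Hd2 HC].
    assert (Hst : indep GS s t) by exact Hc.
    assert (Ew : w = firstn k w ++ (s,b) :: (t,c) :: skipn (k+2) w).
    { rewrite <- Ex, <- Ey. apply (decomp dl k w Hk1). }
    assert (Ew' : swp dl k w = firstn k w ++ (t,c) :: (s,b) :: skipn (k+2) w).
    { rewrite Ew at 1. rewrite <- Hlu at 1. rewrite swp_app. auto. }
    rewrite Ew'.
    destruct (proj1 (epath_app GS A l1 (B :: C :: l2)) Hp) as (Hp1 & HVB & HBC & Hp2).
    fold V in HVB.
    set (sig := sg s b) in *. set (tau := sg t c) in *.
    destruct (classic (sig = tau)) as [Eq|Ne].
    + destruct (sg_eq GS s t b c Hst Eq) as [<- <-].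
      exists (l1 ++ B :: C :: l2). repeat split; auto.
      * rewrite Hm. exact Ew.
      * apply htpy_refl.
    + assert (Hit : indep GS sig tau) by (apply indep_sg; auto).
      assert (Hcub : cubic GS [sig; tau]).
      { apply Hreg. destruct (indep_glide _ _ _ Hst) as [Gs Gt]. split; [|split].
        - constructor; [simpl; intros [H|H]; auto|constructor; [simpl; auto|constructor]].
        - intros x [<-|[<-|[]]]; apply glide_sg; auto.
        - intros x y [<-|[<-|[]]] [<-|[<-|[]]] Hne; try (exfalso; apply Hne; reflexivity); auto.
          apply indep_sym; auto. }
      destruct Hor as (_ & _ & Hsq). destruct (Hsq V sig tau Hcub) as [H1 H2].
      assert (Ecomm : gmul tau (gmul sig V) = gmul sig (gmul tau V)).
      { rewrite !gmulA, (indep_comm _ _ _ Hit); auto. }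
      rewrite HB in HC. rewrite Ecomm in HC.
      subst B C.
      exists (l1 ++ gmul tau V :: gmul sig (gmul tau V) :: l2). repeat split.
      * apply epath_app. fold V. split; auto. simpl. split; [|split; [|auto]].
        -- unfold edge. rewrite gK. apply glide_sg. destruct (indep_glide _ _ _ Hst); auto.
        -- unfold edge. rewrite gK. apply glide_sg. destruct (indep_glide _ _ _ Hst); auto.
      * rewrite mu_app. fold V. cbn [mu]. rewrite Hu. f_equal.
        f_equal; [apply lab_char; split; [rewrite H2, Ecomm; auto | auto] |
          f_equal; [apply lab_char; split; [rewrite <- H1; auto | auto] | auto]].
      * rewrite !split_last. fold V. apply htpy_square; auto.
  - destruct (Hk k Hk1) as (l1 & B & C & l2 & -> & Hu & Hx & Hy2 & Hv & Hlu).
    set (V := last l1 A) in *. rewrite Hy in Hy2.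
    remember (nth k w dl) as x eqn:Ex. destruct x as [s b].
    symmetry in Hx, Hy2. unfold li in Hy2; simpl in Hy2. apply lab_char in Hx, Hy2.
    destruct Hx as [_ HB]; destruct Hy2 as [_ HC]. subst B. rewrite sg_cancel in HC. subst C.
    rewrite rem2_decomp by auto.
    destruct (proj1 (epath_app GS A l1 _) Hp) as (Hp1 & HVB & HBC & Hp2). fold V in HVB.
    exists (l1 ++ l2). repeat split.
    + apply epath_app; fold V; auto.
    + rewrite mu_app. fold V. rewrite Hu, Hv. auto.
    + rewrite !split_last. fold V. apply htpy_back; auto.
Qed.

Lemma lift {G} (GS : GlidingSystem G) (Hreg : regular GS) dir (Hor : orientation GS dir)
  w w' : red GS w w' -> forall A l, epath GS A l -> mu dir A l = w ->
  exists l', epath GS A l' /\ mu dir A l' = w' /\ htpy GS (A :: l) (A :: l').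
Proof.
  induction 1; intros A l Hp Hm.
  - eapply lift_step; eauto.
  - exists l; repeat split; auto. apply htpy_refl.
  - destruct (IHclos_refl_trans1 A l Hp Hm) as (l1 & H1 & H2 & H3).
    destruct (IHclos_refl_trans2 A l1 H1 H2) as (l2 & H4 & H5 & H6).
    exists l2; repeat split; auto. eapply htpy_trans; eauto.
Qed.

Theorem corollary5p5 (G : Group) (GS : GlidingSystem G)
  (Hreg : regular GS) (Hbd : bounded_indep GS)
  (dir : G -> G -> bool) (Hor : orientation GS dir) :
  forall (A : G) (l1 l2 : list G),
    eloop GS A l1 -> eloop GS A l2 ->
    raag_eq GS (mu dir A l1) (mu dir A l2) ->
    htpy GS (A :: l1) (A :: l2).
Proof.
  intros A l1 l2 [Hp1 _] [Hp2 _] Hr.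
  destruct (raag_J GS _ _ Hr) as (v & Hv1 & Hv2).
  destruct (lift GS Hreg dir Hor _ _ Hv1 A l1 Hp1 eq_refl) as (m1 & _ & Hm1 & Hh1).
  destruct (lift GS Hreg dir Hor _ _ Hv2 A l2 Hp2 eq_refl) as (m2 & _ & Hm2 & Hh2).
  rewrite <- Hm2 in Hm1. apply mu_inj in Hm1. subst m2.
  eapply htpy_trans; [exact Hh1| apply htpy_sym; exact Hh2].
Qed.
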